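(* Let $m\ge 38$ be even and let $G$ be a graph with maximum spectral radius among all $H(4,3)$-free graphs with $m$ edges and no isolated vertices. Let $\mathbf{x}$ be the Perron vector of $G$, $u^*$ a vertex maximizing $x_{u^*}$, $N = N(u^* )$, and $A_+ = \{v\in N : d_N(v)\ge 1\}$. Then the induced subgraph $G[A_+]$ is connected.
   Context: All graphs are simple and undirected; $\rho(G)$ is the largest adjacency eigenvalue and the Perron vector is the positive unit eigenvector for $\rho(G)$ (the extremal $G$ is connected). $H(4,3)$ is the graph formed by a cycle of length $4$ and a triangle sharing exactly one common vertex. $N(v)$ denotes the neighbourhood of $v$, $d_S(v)=|N(v)\cap S|$, and $G[S]$ is the subgraph induced by $S$. *)

(* Defs.v *)
From HB Require Import structures.
From mathcomp Require Import all_boot all_order all_algebra.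
From mathcomp Require Import reals.
Set Implicit Arguments. Unset Strict Implicit. Unset Printing Implicit Defensive.
Import Order.TTheory GRing.Theory Num.Theory.
Local Open Scope ring_scope.

Definition simple_graph (n : nat) (e : rel 'I_n) : Prop :=
  (forall i j, e i j = e j i) /\ (forall i, ~~ e i i).

Definition edge_set (n : nat) (e : rel 'I_n) : {set {set 'I_n}} :=
  [set [set x; y] | x in 'I_n, y in 'I_n & e x y].

Definition num_edges (n : nat) (e : rel 'I_n) : nat := #|edge_set e|.

Definition no_isolated (n : nat) (e : rel 'I_n) : Prop :=
  forall v, exists w, e v w.

(* H(4,3): 4-cycle 0-1-2-3-0 and triangle 0-4-5-0 sharing vertex 0. *)
Definition h43_edge (i j : 'I_6) : bool :=
  let a := nat_of_ord i in let b := nat_of_ord j in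
  [|| (a == 0) && (b == 1), (a == 1) && (b == 2), (a == 2) && (b == 3),
      (a == 3) && (b == 0), (a == 0) && (b == 4), (a == 4) && (b == 5)
    | (a == 5) && (b == 0)]%N.

Definition contains_H43 (n : nat) (e : rel 'I_n) : Prop :=
  exists f : 'I_6 -> 'I_n, injective f /\ forall i j, h43_edge i j -> e (f i) (f j).

Definition H43_free (n : nat) (e : rel 'I_n) : Prop := ~ contains_H43 e.

Definition adj (R : realType) (n : nat) (e : rel 'I_n) : 'M[R]_n :=
  \matrix_(i, j) (e i j)%:R.

Definition is_spectral_radius (R : realType) (n : nat) (e : rel 'I_n) (r : R) : Prop :=
  eigenvalue (adj R e) r /\ forall a : R, eigenvalue (adj R e) a -> a <= r.

Definition perron_vector (R : realType) (n : nat) (e : rel 'I_n) (r : R)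
    (x : 'cV[R]_n) : Prop :=
  adj R e *m x = r *: x /\ (forall i, 0 < x i 0) /\ \sum_i (x i 0) ^+ 2 = 1.

Definition extremal_H43 (R : realType) (m n : nat) (e : rel 'I_n) (rho : R) : Prop :=
  [/\ simple_graph e, num_edges e = m, no_isolated e & H43_free e] /\
  is_spectral_radius e rho /\
      (forall (n' : nat) (e' : rel 'I_n') (r' : R),
        simple_graph e' -> num_edges e' = m -> no_isolated e' -> H43_free e' ->
        is_spectral_radius e' r' -> r' <= rho).

Definition nbhd (n : nat) (e : rel 'I_n) (u : 'I_n) : {set 'I_n} := [set v | e u v].

Definition Aplus (n : nat) (e : rel 'I_n) (N : {set 'I_n}) : {set 'I_n} :=
  [set v in N | [exists w in N, e v w]].

Definition induced_connected (n : nat) (e : rel 'I_n) (S : {set 'I_n}) : Prop :=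
  forall a b, a \in S -> b \in S ->
    connect [rel x y | [&& e x y, x \in S & y \in S]] a b.

(* Main.v *)
Require Import Defs.
From HB Require Import structures.
From mathcomp Require Import all_boot all_order all_algebra.
From mathcomp Require Import reals.
From mathcomp Require Import polyrcf.
From mathcomp Require Import ring lra zify.
Import Order.TTheory GRing.Theory Num.Theory.
Local Open Scope ring_scope.

Lemma seq_max (R : realDomainType) (P : pred R) (s : seq R) a0 : P a0 ->
  exists r, [/\ P r, a0 <= r & forall a, a \in s -> P a -> a <= r].
Proof.
move=> Pa0; elim: s => [|b s [r [Pr ar Hr]]].
  by exists a0; split.
case: (boolP (P b && (r < b))) => [/andP[Pb rb]|Hb].
  exists b; split=> //; first by rewrite (le_trans ar) // ltW.
  move=> a; rewrite inE => /orP[/eqP->//|as_] Pa.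
  by rewrite (le_trans (Hr a as_ Pa)) // ltW.
exists r; split=> // a; rewrite inE => /orP[/eqP->|as_] Pa; last exact: Hr.
by move: Hb; rewrite Pa /= -leNgt.
Qed.

Lemma max_eig (R : realType) n (A : 'M[R]_n) a0 : eigenvalue A a0 ->
  exists r, [/\ eigenvalue A r, (forall a, eigenvalue A a -> a <= r) & a0 <= r].
Proof.
move=> Ha0.
have [r [Pr ar Hr]] := @seq_max R (eigenvalue A) (rootsR (char_poly A)) a0 Ha0.
exists r; split=> // a Ha; apply: Hr => //.
have nz : char_poly A != 0 by apply: monic_neq0; apply: char_poly_monic.
have := roots_on_rootsR nz a.
by rewrite -eigenvalue_root_char Ha andbT in_itv /= => <-.
Qed.

Lemma h43_of n (e : rel 'I_n) (v0 v1 v2 v3 v4 v5 : 'I_n) :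
  uniq [:: v0; v1; v2; v3; v4; v5] ->
  e v0 v1 -> e v1 v2 -> e v2 v3 -> e v3 v0 -> e v0 v4 -> e v4 v5 -> e v5 v0 ->
  contains_H43 e.
Proof.
move=> U e01 e12 e23 e30 e04 e45 e50.
exists (fun i : 'I_6 => nth v0 [:: v0; v1; v2; v3; v4; v5] i); split.
  move=> i j /eqP; rewrite nth_uniq // => /eqP H; exact: val_inj.
by move=> [[|[|[|[|[|[|[|?]]]]]]] ?] [[|[|[|[|[|[|[|?]]]]]]] ?].
Qed.

Lemma dN_le1 n (e : rel 'I_n) (u a0 b0 w c y : 'I_n) :
  simple_graph e -> H43_free e ->
  let N := nbhd e u in let A := Aplus e N in
  let r := [rel x y | [&& e x y, x \in A & y \in A]] in
  a0 \in A -> b0 \in A -> ~~ connect r a0 b0 ->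
  w \in N -> c \in N -> y \in N -> e w c -> e w y -> c = y.
Proof.
move=> [sym irr] free N A r a0A b0A nc wN cN yN ewc ewy.
apply/eqP/negPn/negP => ncy.
have rsym : connect_sym r.
  apply: sym_connect_sym => p q /=; rewrite sym; case: (e q p) => //=; by rewrite andbC.
have inA : forall p q, p \in N -> q \in N -> e p q -> p \in A.
  by move=> p q pN qN epq; rewrite inE pN; apply/existsP; exists q; rewrite qN.
have wA : w \in A by apply: inA ewc.
have cA : c \in A by apply: (inA c w) => //; rewrite sym.
have yA : y \in A by apply: (inA y w) => //; rewrite sym.
have rwc : connect r w c by apply: connect1; rewrite /= ewc wA cA.
have rwy : connect r w y by apply: connect1; rewrite /= ewy wA yA.
have [a [aA nwa]] : exists a, a \in A /\ ~~ connect r w a.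
  case: (boolP (connect r w a0)) => H0; last by exists a0.
  case: (boolP (connect r w b0)) => H1; last by exists b0.
  by move: nc; rewrite (connect_trans _ H1) // rsym.
have aN : a \in N by move: aA; rewrite inE => /andP[].
have [bb bbN eab] : exists2 bb, bb \in N & e a bb.
  by move: aA; rewrite inE => /andP[_ /existsP[bb /andP[? ?]]]; exists bb.
have bbA : bb \in A by apply: (inA bb a) => //; rewrite sym.
have rab : connect r a bb by apply: connect1; rewrite /= eab aA bbA.
have nwb : ~~ connect r w bb.
  by apply: contra nwa => H; rewrite (connect_trans H) // rsym.
have uN : u \notin N by rewrite inE irr.
have neq : forall p q, p \in N -> q \notin N -> p != q.
  by move=> p q pN qN; apply: contraNneq qN => <-.
apply: free; apply: (@h43_of n e u c w y a bb).
- have ne1 : forall p, ~~ connect r w p -> forall q, connect r w q -> p != q.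
    by move=> p Hp q Hq; apply: contraNneq Hp => ->.
  have f1 := neq c u cN uN. have f2 := neq w u wN uN. have f3 := neq y u yN uN.
  have f4 := neq a u aN uN. have f5 := neq bb u bbN uN.
  have f6 := ne1 a nwa c rwc. have f7 := ne1 a nwa y rwy.
  have f8 := ne1 a nwa w (connect0 _ _).
  have f9 := ne1 bb nwb c rwc. have f10 := ne1 bb nwb y rwy.
  have f11 := ne1 bb nwb w (connect0 _ _).
  have f12 : w != c by apply/negP => /eqP E; move: ewc; rewrite E (negbTE (irr c)).
  have f13 : w != y by apply/negP => /eqP E; move: ewy; rewrite E (negbTE (irr y)).
  have f14 : a != bb by apply/negP => /eqP E; move: eab; rewrite E (negbTE (irr bb)).
  rewrite /= !inE !negb_or.
  repeat (apply/andP; split); by rewrite // eq_sym.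
- by move: cN; rewrite inE.
- by rewrite sym.
- done.
- by move: yN; rewrite inE sym.
- by move: aN; rewrite inE.
- done.
- by move: bbN; rewrite inE sym.
Qed.
Lemma count_lb n (e : rel 'I_n) (N : {set 'I_n}) p p' q q' :
  e p p' -> e q q' -> p \in N -> p' \in N -> q \in N -> q' \in N ->
  [set p; p'] != [set q; q'] ->
  (#|[set z : 'I_n * 'I_n | [&& z.1 \in N, z.2 \notin N & e z.1 z.2]]| + 2
     <= num_edges e)%N.
Proof.
move=> epp eqq pN p'N qN q'N neq.
set D := [set z : 'I_n * 'I_n | _].
pose f (z : 'I_n * 'I_n) := [set z.1; z.2].
have injf : {in D &, injective f}.
  move=> [a b] [c d]; rewrite !inE /= => /and3P[aN bN _] /and3P[cN dN _] Hf.
  have ha : a \in f (c, d) by rewrite -Hf /f /= !inE eqxx.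
  have hb : b \in f (c, d) by rewrite -Hf /f /= !inE eqxx orbT.
  move: ha hb; rewrite /f /= !inE => /orP[/eqP ac|/eqP ad] /orP[/eqP bc|/eqP bd].
  - by move: bN; rewrite bc cN.
  - by rewrite ac bd.
  - by move: dN; rewrite -ad aN.
  - by move: dN; rewrite -ad aN.
have cI := card_in_imset injf.
set S := [set [set p; p']; [set q; q']].
have cS : #|S| = 2%N by rewrite cards2 neq.
have disj : [disjoint f @: D & S].
  apply/pred0P => E /=; apply/negP => /andP[/imsetP[[a b] + ->]].
  rewrite inE /= => /and3P[_ bN _].
  have bin : b \in f (a, b) by rewrite /f !inE eqxx orbT.
  rewrite !inE => /orP[] /eqP Hab; move: bin; rewrite Hab !inE =>
    /orP[] /eqP Hb; by rewrite Hb ?pN ?p'N ?qN ?q'N in bN.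
have sub : f @: D :|: S \subset edge_set e.
  apply/subsetP => E; rewrite inE => /orP[/imsetP[[a b] + ->]|].
    rewrite inE /= => /and3P[_ _ eab].
    by apply/imset2P; exists a b; rewrite ?inE.
  rewrite !inE => /orP[] /eqP ->; apply/imset2P.
    by exists p p'; rewrite ?inE.
  by exists q q'; rewrite ?inE.
have [_] := leq_card_setU (f @: D) S.
rewrite disj => /eqP HU.
by rewrite /num_edges -cI -cS -HU subset_leq_card.
Qed.

Lemma perron_eq (R : realType) n (e : rel 'I_n) rho (x : 'cV[R]_n) :
  perron_vector e rho x -> forall v, rho * x v 0 = \sum_w (e v w)%:R * x w 0.
Proof.
move=> [H _] v; have := congr1 (fun M : 'cV[R]_n => M v 0) H.
rewrite !mxE => <-; apply: eq_bigr => w _; by rewrite mxE.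
Qed.

Lemma main_bound (R : realType) n (e : rel 'I_n) rho (x : 'cV[R]_n) u a0 b0 :
  simple_graph e -> H43_free e -> perron_vector e rho x ->
  (forall v, x v 0 <= x u 0) ->
  let N := nbhd e u in let A := Aplus e N in
  let r := [rel x y | [&& e x y, x \in A & y \in A]] in
  a0 \in A -> b0 \in A -> ~~ connect r a0 b0 ->
  rho ^+ 2 - rho + 2 <= (num_edges e)%:R.
Proof.
move=> sg free px xmax N A r a0A b0A nc.
have [sym irr] := sg.
have xpos : forall v, 0 < x v 0 by case: px => _ [].
set X := x u 0.
have peq := @perron_eq R n e rho x px.
set D := [set z : 'I_n * 'I_n | [&& z.1 \in N, z.2 \notin N & e z.1 z.2]].
have cD : (#|D| + 2 <= num_edges e)%N.
  have [p' p'N ep] : exists2 p', p' \in N & e a0 p'.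
    by move: a0A; rewrite inE => /andP[_ /existsP[q /andP[? ?]]]; exists q.
  have [q' q'N eq] : exists2 q', q' \in N & e b0 q'.
    by move: b0A; rewrite inE => /andP[_ /existsP[q /andP[? ?]]]; exists q.
  have aN : a0 \in N by move: a0A; rewrite inE => /andP[].
  have bN : b0 \in N by move: b0A; rewrite inE => /andP[].
  have := @count_lb n e N a0 p' b0 q' ep eq aN p'N bN q'N; apply.
  apply/negP => /eqP E.
  have : b0 \in [set a0; p'] by rewrite E !inE eqxx.
  rewrite !inE => /orP[] /eqP Eb.
    by move: nc; rewrite Eb connect0.
  have p'A : p' \in A by rewrite inE p'N; apply/existsP; exists a0; rewrite aN sym.
  by move: nc; rewrite Eb; rewrite connect1 //= ep a0A p'A.
have h1 : rho * X = \sum_v (v \in N)%:R * x v 0.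
  by rewrite /X peq; apply: eq_bigr => v _; rewrite inE.
pose F v w := (v \in N)%:R * ((e v w)%:R * x w 0).
have h2 : rho ^+ 2 * X = \sum_v \sum_w F v w.
  rewrite expr2 -mulrA h1 mulr_sumr; apply: eq_bigr => v _.
  by rewrite mulrCA peq mulr_sumr.
have hsplit : \sum_v \sum_w F v w =
   \sum_w \sum_v ((w \in N)%:R * F v w) + \sum_v \sum_w ((w \notin N)%:R * F v w).
  rewrite [X in X + _]exchange_big /= -big_split /=; apply: eq_bigr => v _.
  rewrite -big_split /=; apply: eq_bigr => w _.
  by case: (w \in N); rewrite /= ?mul1r ?mul0r ?add0r ?addr0.
have hA : \sum_w \sum_v ((w \in N)%:R * F v w) <= rho * X.
  rewrite h1; apply: ler_sum => w _.
  case: (boolP (w \in N)) => wN; last first.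
    by rewrite mul0r big1 // => v _; rewrite mul0r.
  have -> : \sum_v (true%:R * F v w) =
            (\sum_v ((v \in N) && e v w)%:R) * x w 0.
    rewrite mulr_suml; apply: eq_bigr => v _.
    by rewrite /F mul1r; case: (v \in N); case: (e v w); rewrite /= ?mul1r ?mul0r.
  rewrite mul1r ler_piMl ?(ltW (xpos w)) //.
  case: (boolP [exists c, (c \in N) && e c w]) => [/existsP[c /andP[cN ecw]]|H].
    rewrite (eq_bigr (fun v => (v == c)%:R)); last first.
      move=> v _; case: (boolP ((v \in N) && e v w)) => [/andP[vN evw]|Hv].
        rewrite (@dN_le1 n e u a0 b0 w v c sg free a0A b0A nc wN vN cN) ?eqxx //;
          by rewrite sym.
      case: (boolP (v == c)) => // /eqP vc.
      by move: Hv; rewrite vc cN ecw.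
    by rewrite (bigD1 c) //= eqxx big1 ?addr0 // => v /negbTE ->.
  rewrite big1 // => v _.
  case: (boolP ((v \in N) && e v w)) => // Hv.
  by move: H; rewrite negb_exists => /forallP /(_ v); rewrite Hv.
have hB : \sum_v \sum_w ((w \notin N)%:R * F v w) <= (#|D|)%:R * X.
  have -> : (#|D|)%:R = \sum_v \sum_w ((v \in N) && (w \notin N) && e v w)%:R :> R.
    rewrite -sum1dep_card natr_sum big_mkcond pair_bigA /=.
    apply: eq_bigr => -[v w] _ /=; rewrite andbA.
    by case: ((v \in N) && (w \notin N) && e v w).
  rewrite mulr_suml; apply: ler_sum => v _; rewrite mulr_suml; apply: ler_sum => w _.
  rewrite /F; case: (v \in N); case: (w \in N); case: (e v w);
    rewrite /= ?mul0r ?mulr0 ?mul1r ?xmax //.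
have key : rho ^+ 2 * X <= (rho + (#|D|)%:R) * X.
  by rewrite h2 hsplit mulrDl lerD.
have key2 : rho ^+ 2 <= rho + (#|D|)%:R.
  by rewrite -(ler_pM2r (xpos u)).
have : ((#|D| + 2)%:R <= (num_edges e)%:R :> R) by rewrite ler_nat.
rewrite natrD => H2.
apply: le_trans H2; rewrite lerD2r lerBlDl //.
Qed.

Lemma root_exists (R : realType) (T : R) : 1 <= T ->
  exists a : R, [/\ (a ^+ 2 - T - 1) * (a ^+ 2 - T) = (a + T) ^+ 2, 1 < a &
                    T *+ 2 < a ^+ 2 - a].
Proof.
move=> T1.
set s := Num.sqrt (1 + 8 * T).
have s0 : 0 <= s by rewrite sqrtr_ge0.
have hs : s ^+ 2 = 1 + 8 * T by rewrite sqr_sqrtr //; lra.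
have s3 : 3 <= s.
  rewrite leNgt; apply/negP => h.
  have : s * s < 3 * 3 by apply: ltr_pM => //.
  rewrite -expr2 hs; lra.
set c := (1 + s) / 2.
have hc : c ^+ 2 - c = T *+ 2.
  rewrite /c.
  have -> : ((1 + s) / 2) ^+ 2 - (1 + s) / 2 = (s ^+ 2 - 1) / 4 by field; lra.
  rewrite hs mulr2n; field; lra.
have c2 : 2 <= c by rewrite /c; lra.
pose P : {poly R} := ('X^2 - (T + 1)%:P) * ('X^2 - T%:P) - ('X + T%:P) ^+ 2.
have PE : forall a, P.[a] = (a ^+ 2 - T - 1) * (a ^+ 2 - T) - (a + T) ^+ 2.
  move=> a; rewrite /P !hornerE /=; rewrite opprD addrA //.
have Pc : P.[c] < 0.
  rewrite PE.
  have -> : c ^+ 2 = c + T *+ 2 by rewrite -hc; ring.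
  rewrite mulr2n; nra.
have cT : c <= T + 2 by rewrite mulr2n in hc; nra.
have PT : 0 <= P.[T + 2] by rewrite PE; nra.
have [a /andP[ca aT] ra] := @poly_ivt R P c (T + 2) cT (ltac:(by rewrite (ltW Pc) PT)).
have Pa : P.[a] = 0 by apply/eqP.
have nac : a != c by apply/negP => /eqP E; move: Pc; rewrite -E Pa ltxx.
have ca' : c < a by rewrite lt_neqAle eq_sym nac ca.
exists a; split.
- by apply/eqP; rewrite -subr_eq0 -PE Pa.
- lra.
- rewrite -hc; nra.
Qed.

Local Close Scope ring_scope.
Lemma num_edges_pairs n (e : rel 'I_n) : simple_graph e ->
  num_edges e = (\sum_(i : 'I_n) \sum_(j : 'I_n) ((i < j) && e i j))%N.
Proof.
move=> [sym irr].
set D := [set z : 'I_n * 'I_n | (z.1 < z.2) && e z.1 z.2].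
pose f (z : 'I_n * 'I_n) := [set z.1; z.2].
have ES : edge_set e = f @: D.
  apply/setP => E; apply/imset2P/imsetP.
    move=> [a b _]; rewrite inE => eab ->.
    case: (ltngtP a b) => [ab|ba|ab].
    - by exists (a, b); rewrite // inE /= ab.
    - by exists (b, a); rewrite /f /= 1?setUC // inE /= ba sym.
    - by move: eab; rewrite (val_inj ab) (negbTE (irr b)).
  move=> [[a b]]; rewrite inE /= => /andP[_ eab] ->.
  by exists a b; rewrite ?inE.
have injf : {in D &, injective f}.
  move=> [a b] [c d]; rewrite !inE /= => /andP[ab _] /andP[cd _] Hf.
  have ha : a \in f (c, d) by rewrite -Hf /f /= !inE eqxx.
  have hb : b \in f (c, d) by rewrite -Hf /f /= !inE eqxx orbT.
  move: ha hb; rewrite /f /= !inE => /orP[/eqP ac|/eqP ad] /orP[/eqP bc|/eqP bd].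
  - by move: ab; rewrite ac bc ltnn.
  - by rewrite ac bd.
  - by move: ab cd; rewrite ad bc => /ltn_trans H /H; rewrite ltnn.
  - by move: ab; rewrite ad bd ltnn.
rewrite /num_edges ES (card_in_imset injf) -sum1dep_card.
rewrite big_mkcond pair_bigA /=; apply: eq_bigr => -[a b] _ /=.
by case: ((a < b) && e a b).
Qed.

Local Open Scope ring_scope.
Lemma sum3 (V : nmodType) t (F : nat -> V) :
  \sum_(i < t.+3) F i = F 0%N + F 1%N + F 2%N + \sum_(i < t) F i.+3.
Proof.
rewrite big_ord_recl big_ord_recl big_ord_recl /= !addrA.
congr (_ + _); apply: eq_bigr => i _; by rewrite !lift0.
Qed.

Definition e0n (a b : nat) : bool :=
  [|| (a == 0) && (b == 1), (a == 1) && (b == 0), (a == 0) && (2 <= b),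
      (b == 0) && (2 <= a), (a == 1) && (3 <= b) | (b == 1) && (3 <= a)]%N.

Definition e0 {k} (i j : 'I_k) : bool := e0n i j.

Lemma e0n_sym a b : e0n a b = e0n b a.
Proof. by case: a => [|[|[|a]]]; case: b => [|[|[|b]]]. Qed.

Lemma e0_simple k : simple_graph (@e0 k).
Proof.
split=> [i j|i]; first exact: e0n_sym.
by rewrite /e0; case: (nat_of_ord i) => [|[|[|a]]].
Qed.

Lemma e0_noiso t : no_isolated (@e0 t.+3).
Proof.
move=> v; case: (boolP (nat_of_ord v == 0%N)) => [/eqP v0|v0].
  by exists (@Ordinal t.+3 1 isT); rewrite /e0 v0.
exists ord0; rewrite /e0 /e0n /=.
by move: v0; case: (nat_of_ord v) => [|[|[|a]]].
Qed.

Lemma e0_cover k (i j : 'I_k) : e0 i j -> (i <= 1)%N || (j <= 1)%N.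
Proof. by rewrite /e0; case: (nat_of_ord i) => [|[|[|a]]]; case: (nat_of_ord j) => [|[|[|b]]]. Qed.

Lemma three_small (p q r : nat) : (p <= 1)%N -> (q <= 1)%N -> (r <= 1)%N ->
  p != q -> q != r -> p != r -> False.
Proof. by case: p => [|[|?]] //; case: q => [|[|?]] //; case: r => [|[|?]]. Qed.

Lemma e0_free k : H43_free (@e0 k).
Proof.
move=> [f [injf hf]].
pose o (a : nat) (H : (a < 6)%N) := Ordinal H.
have ne : forall i j : 'I_6, i != j -> nat_of_ord (f i) != f j.
  by move=> i j; apply: contra => /eqP /val_inj /injf ->.
have E := fun a b Ha Hb H => @e0_cover k _ _ (hf (o a Ha) (o b Hb) H).
have e01 := E 0%N 1%N isT isT isT. have e12 := E 1%N 2%N isT isT isT.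
have e23 := E 2%N 3%N isT isT isT. have e30 := E 3%N 0%N isT isT isT.
have e04 := E 0%N 4%N isT isT isT. have e45 := E 4%N 5%N isT isT isT.
have e50 := E 5%N 0%N isT isT isT.
have N := fun a b Ha Hb H => ne (o a Ha) (o b Hb) H.
case: (boolP (f (o 0%N isT) <= 1)%N) => h0.
  move: e12 e45 => /orP[] h1 /orP[] h2.
  - exact: (@three_small _ _ _ h0 h1 h2 (N 0 1 isT isT isT) (N 1 4 isT isT isT) (N 0 4 isT isT isT)).
  - exact: (@three_small _ _ _ h0 h1 h2 (N 0 1 isT isT isT) (N 1 5 isT isT isT) (N 0 5 isT isT isT)).
  - exact: (@three_small _ _ _ h0 h1 h2 (N 0 2 isT isT isT) (N 2 4 isT isT isT) (N 0 4 isT isT isT)).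
  - exact: (@three_small _ _ _ h0 h1 h2 (N 0 2 isT isT isT) (N 2 5 isT isT isT) (N 0 5 isT isT isT)).
move: e01 e30 e04; rewrite (negbTE h0) /= ?orbF => h1 h3 h4.
exact: (@three_small _ _ _ h1 h3 h4 (N 1 3 isT isT isT) (N 3 4 isT isT isT) (N 1 4 isT isT isT)).
Qed.

Lemma e0_eig (R : realType) t (a : R) : 0 < a ->
  (a ^+ 2 - t%:R - 1) * (a ^+ 2 - t%:R) = (a + t%:R) ^+ 2 ->
  eigenvalue (adj R (@e0 t.+3)) a.
Proof.
move=> a0 qa; set T : R := t%:R.
have T0 : 0 <= T by rewrite /T ler0n.
set al := a + T; set be := a ^+ 2 - T - 1.
pose fv (k : nat) : R :=
  if k == 0%N then al else if k == 1%N then be else if k == 2%N then al / a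
  else (al + be) / a.
apply/eigenvalueP; exists (\row_(j < t.+3) fv j); last first.
  apply/negP => /eqP /rowP /(_ ord0); rewrite !mxE /= => H.
  have : 0 < al by rewrite /al; lra.
  by move: H; rewrite /fv /= => ->; rewrite ltxx.
apply/rowP => j; rewrite !mxE.
rewrite (eq_bigr (fun i : 'I_t.+3 => fv i * (e0n i j)%:R)); last first.
  by move=> i _; rewrite !mxE.
rewrite (@sum3 R t (fun k => fv k * (e0n k j)%:R)) /=.
have iterE : forall (c : R) k, iter k (+%R c) 0 = c * k%:R.
  by move=> c; elim=> [|k IH] /=; rewrite ?mulr0 // IH mulrS; ring.
have an : a != 0 by rewrite gt_eqF.
case: j => [[|[|[|j]]] Hj] /=; rewrite /fv /= ?mulr1 ?mulr0 ?add0r ?addr0 ?mul0r big_const_ord iterE -/T ?mul0r ?addr0.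
- by rewrite /al /be; field.
- apply/eqP; rewrite -subr_eq0; apply/eqP.
  have -> : al + (al + be) / a * T - a * be =
     ((a + T) ^+ 2 - (a ^+ 2 - T - 1) * (a ^+ 2 - T)) / a.
    by rewrite /al /be; field.
  by rewrite /T -qa subrr mul0r.
- by rewrite mulrC divfK.
- by rewrite mulrC divfK.
Qed.

Local Close Scope ring_scope.
Lemma sum3n t (F : nat -> nat) :
  (\sum_(i < t.+3) F i = F 0 + F 1 + F 2 + \sum_(i < t) F i.+3)%N.
Proof.
rewrite big_ord_recl big_ord_recl big_ord_recl /= !addnA.
congr (_ + _); apply: eq_bigr => i _; by rewrite !lift0.
Qed.

Lemma count_e0 t :
  (\sum_(i < t.+3) \sum_(j < t.+3) ((i < j) && e0n i j) = (t.+1).*2)%N.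
Proof.
rewrite (sum3n t (fun a => \sum_(j < t.+3) ((a < j) && e0n a j))%N).
rewrite !(sum3n t (fun j => (0 < j) && e0n 0 j)%N).
rewrite !(sum3n t (fun j => (1 < j) && e0n 1 j)%N).
rewrite !(sum3n t (fun j => (2 < j) && e0n 2 j)%N) /=.
rewrite big1_eq [X in (_ + X)%N = _]big1; last first.
  move=> i _; rewrite (sum3n t (fun j => (i.+3 < j) && e0n i.+3 j)%N) /=.
  rewrite big1 // => j _; by rewrite /e0n /= andbF.
rewrite sum_nat_const card_ord muln1 -addnn; lia.
Qed.
Local Open Scope ring_scope.

Theorem claim2 (R : realType) (m n : nat) (e : rel 'I_n) (rho : R)
    (x : 'cV[R]_n) (ustar : 'I_n) :
  (38 <= m)%N -> ~~ odd m ->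
  extremal_H43 m e rho ->
  perron_vector e rho x ->
  (forall v, x v 0 <= x ustar 0) ->
  induced_connected e (Aplus e (nbhd e ustar)).
Proof.
move=> m38 mev [[sg em noiso free] [srho ext]] px xmax a b aA bA.
apply/negPn/negP => nc.
have HB := @main_bound R n e rho x ustar a b sg free px xmax aA bA nc.
rewrite em in HB.
set t := (m./2).-1.
have Em : m = (t.*2 + 2)%N.
  have := odd_double_half m; rewrite (negbTE mev) add0n => E.
  rewrite /t; lia.
have t1 : (1 <= t)%N by rewrite /t; lia.
have [a0 [qa a01 a0T]] := @root_exists R t%:R ltac:(by rewrite ler1n).
have eig := @e0_eig R t a0 ltac:(lra) qa.
have [r0 [r0e r0max a0r0]] := @max_eig R t.+3 _ a0 eig.
have cnt : num_edges (@e0 t.+3) = m.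
  rewrite num_edges_pairs; last exact: e0_simple.
  have -> := count_e0 t. lia.
have := ext t.+3 (@e0 t.+3) r0 (@e0_simple t.+3) cnt (@e0_noiso t) (@e0_free t.+3)
  (conj r0e r0max).
move=> r0rho.
move: HB; rewrite Em natrD -muln2 natrM => HB.
have : rho ^+ 2 - rho >= a0 ^+ 2 - a0 by nra.
rewrite -mulr_natr in a0T.
lra.
Qed.
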